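(* Let $\Gamma$ be a connected graph on vertices $\{1,\dots,N\}$ containing all loops $(i,i)$. Then there is an open, everywhere dense subset $\mathbf H_\Gamma^{(+)}\subset\mathbf H_\Gamma$ whose complement $\mathbf H_\Gamma\setminus\mathbf H_\Gamma^{(+)}$ has dimension smaller than $\dim\mathbf H_\Gamma$, such that $\dim L_0(V)=0$ (i.e. $l_V=\mathbb R^N$) for every $V\in\mathbf H_\Gamma^{(+)}$.
   Context: $\mathbf H_\Gamma$ is the set of real symmetric positive-definite $N\times N$ matrices $V$ with $V(i,j)=0$ whenever $(i,j)$ is not an edge of $\Gamma$; it is an open subset of a real vector space whose dimension equals the number of edges of $\Gamma$ (loops included). $l_V$ is the span of $V^ke_1$, $k\ge0$, where $e_1$ is the first standard basis vector (vertex $1$ is the particle in contact with the environment); $L_-(V)=\{(q,p)\in\mathbb R^{2N}:q,p\in l_V\}$ and $L_0(V)$ is its orthogonal complement. *)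

(* Defs.v *)
From Stdlib Require Import Reals Relations.
Open Scope R_scope.

(* Conventions: vertices {1,...,N} are encoded as indices 0..N-1 (vertex 1 = index 0).
   Vectors of R^N are functions nat -> R (only indices < N matter);
   N x N matrices are functions nat -> nat -> R. *)

Fixpoint sumN (n : nat) (f : nat -> R) : R :=
  match n with O => 0 | S m => sumN m f + f m end.

Definition dot (N : nat) (x y : nat -> R) : R := sumN N (fun i => x i * y i).

Definition matvec (N : nat) (V : nat -> nat -> R) (x : nat -> R) : nat -> R :=
  fun i => sumN N (fun j => V i j * x j).

Definition e1 : nat -> R := fun i => if Nat.eqb i 0 then 1 else 0.

Fixpoint krylov (N : nat) (V : nat -> nat -> R) (k : nat) : nat -> R :=
  match k with
  | O => e1
  | S k' => matvec N V (krylov N V k')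
  end.

Definition in_lV (N : nat) (V : nat -> nat -> R) (x : nat -> R) : Prop :=
  exists (n : nat) (c : nat -> R),
    forall i, (i < N)%nat -> x i = sumN n (fun k => c k * krylov N V k i).

Definition in_Lminus (N : nat) (V : nat -> nat -> R) (q p : nat -> R) : Prop :=
  in_lV N V q /\ in_lV N V p.

Definition in_L0 (N : nat) (V : nat -> nat -> R) (q p : nat -> R) : Prop :=
  forall a b, in_Lminus N V a b -> dot N q a + dot N p b = 0.

Definition L0_trivial (N : nat) (V : nat -> nat -> R) : Prop :=
  forall q p, in_L0 N V q p -> forall i, (i < N)%nat -> q i = 0 /\ p i = 0.

Definition lV_full (N : nat) (V : nat -> nat -> R) : Prop :=
  forall x : nat -> R, in_lV N V x.

Definition edge (N : nat) (adj : nat -> nat -> bool) (i j : nat) : Prop :=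
  (i < N)%nat /\ (j < N)%nat /\ adj i j = true.

Definition graph_symmetric (adj : nat -> nat -> bool) : Prop :=
  forall i j, adj i j = adj j i.

Definition all_loops (N : nat) (adj : nat -> nat -> bool) : Prop :=
  forall i, (i < N)%nat -> adj i i = true.

Definition graph_connected (N : nat) (adj : nat -> nat -> bool) : Prop :=
  forall i j, (i < N)%nat -> (j < N)%nat -> clos_refl_trans nat (edge N adj) i j.

(* The linear space S_Gamma of symmetric matrices supported on the edges of Gamma
   (its dimension is the number of edges, loops included). *)
Definition in_SGamma (N : nat) (adj : nat -> nat -> bool) (V : nat -> nat -> R) : Prop :=
  (forall i j, V i j = V j i) /\
  (forall i j, ~ edge N adj i j -> V i j = 0).

Definition pos_def (N : nat) (V : nat -> nat -> R) : Prop :=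
  forall x : nat -> R, (exists i, (i < N)%nat /\ x i <> 0) -> dot N x (matvec N V x) > 0.

Definition in_HGamma (N : nat) (adj : nat -> nat -> bool) (V : nat -> nat -> R) : Prop :=
  in_SGamma N adj V /\ pos_def N V.

(* closeness of matrices in the max-norm over entries (all norms are equivalent) *)
Definition mx_close (N : nat) (eps : R) (V W : nat -> nat -> R) : Prop :=
  forall i j, (i < N)%nat -> (j < N)%nat -> Rabs (V i j - W i j) < eps.

Definition rel_open (N : nat) (adj : nat -> nat -> bool) (A : (nat -> nat -> R) -> Prop) : Prop :=
  forall V, A V -> exists eps, eps > 0 /\
    forall W, in_HGamma N adj W -> mx_close N eps V W -> A W.

Definition dense_in_H (N : nat) (adj : nat -> nat -> bool) (A : (nat -> nat -> R) -> Prop) : Prop :=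
  forall V, in_HGamma N adj V -> forall eps, eps > 0 ->
    exists W, A W /\ mx_close N eps V W.

Inductive mpoly : Type :=
| PConst : R -> mpoly
| PVar : nat -> nat -> mpoly
| PAdd : mpoly -> mpoly -> mpoly
| PMul : mpoly -> mpoly -> mpoly.

Fixpoint peval (p : mpoly) (V : nat -> nat -> R) : R :=
  match p with
  | PConst c => c
  | PVar i j => V i j
  | PAdd p1 p2 => peval p1 V + peval p2 V
  | PMul p1 p2 => peval p1 V * peval p2 V
  end.

(* "The subset B of H_Gamma has dimension < dim H_Gamma", in the algebraic sense:
   B is contained in the zero locus of a polynomial function on the linear space
   S_Gamma (= R^{#edges}) which does not vanish identically on S_Gamma. *)
Definition lower_dim (N : nat) (adj : nat -> nat -> bool) (B : (nat -> nat -> R) -> Prop) : Prop :=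
  exists p : mpoly,
    (exists W, in_SGamma N adj W /\ peval p W <> 0) /\
    (forall V, B V -> peval p V = 0).

(* Main.v *)
Require Import Defs.
From Stdlib Require Import Reals Relations Lra Lia List Bool.
From mathcomp Require all_boot all_order all_algebra Rstruct.
Open Scope R_scope.

Lemma sumN_ext n f g : (forall k, (k < n)%nat -> f k = g k) -> sumN n f = sumN n g.
Proof. induction n; simpl; intros H; auto. rewrite IHn by (intros; apply H; lia). rewrite H by lia; auto. Qed.

Lemma sumN_add n f g : sumN n (fun k => f k + g k) = sumN n f + sumN n g.
Proof. induction n; simpl. lra. rewrite IHn; lra. Qed.

Lemma sumN_scal n c f : sumN n (fun k => c * f k) = c * sumN n f.
Proof. induction n; simpl. lra. rewrite IHn; lra. Qed.

Lemma sumN_opp n f : sumN n (fun k => - f k) = - sumN n f.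
Proof. induction n; simpl. lra. rewrite IHn; lra. Qed.

Lemma sumN_zero n : sumN n (fun _ => 0) = 0.
Proof. induction n; simpl; lra. Qed.

Lemma sumN_swap n m (f : nat -> nat -> R) :
  sumN n (fun i => sumN m (fun j => f i j)) = sumN m (fun j => sumN n (fun i => f i j)).
Proof.
  induction n; simpl. now rewrite sumN_zero. rewrite IHn, <- sumN_add. reflexivity.
Qed.

Lemma sumN_le n f g : (forall k, (k < n)%nat -> f k <= g k) -> sumN n f <= sumN n g.
Proof. induction n; simpl; intros H. lra. assert (H1 := H n ltac:(lia)). assert (sumN n f <= sumN n g) by (apply IHn; intros; apply H; lia). lra. Qed.

Lemma sumN_nonneg n f : (forall k, (k < n)%nat -> 0 <= f k) -> 0 <= sumN n f.
Proof. intros H. rewrite <- (sumN_zero n). apply sumN_le; auto. Qed.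

Lemma sumN_pos n f i : (forall k, (k < n)%nat -> 0 <= f k) -> (i < n)%nat -> 0 < f i -> 0 < sumN n f.
Proof.
  induction n; simpl; intros H Hi Hf. lia.
  assert (0 <= sumN n f) by (apply sumN_nonneg; intros; apply H; lia).
  assert (0 <= f n) by (apply H; lia).
  destruct (Nat.eq_dec i n). subst; lra.
  assert (0 < sumN n f) by (apply IHn; auto; try lia; intros; apply H; lia). lra.
Qed.

Lemma sumN_delta n i g : (i < n)%nat ->
  sumN n (fun j => (if Nat.eqb i j then 1 else 0) * g j) = g i.
Proof.
  induction n; simpl; intros Hi. lia.
  destruct (Nat.eqb_spec i n).
  - subst. rewrite (sumN_ext _ _ (fun _ => 0)). rewrite sumN_zero; lra.
    intros k Hk. destruct (Nat.eqb_spec n k); [lia|lra].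
  - rewrite IHn by lia. lra.
Qed.

Lemma sumN_const n c : sumN n (fun _ => c) = INR n * c.
Proof. induction n. simpl; lra. change (sumN (S n) (fun _ => c)) with (sumN n (fun _ => c) + c). rewrite IHn, S_INR. lra. Qed.

Fixpoint bnd (N : nat) (p : mpoly) : Prop :=
  match p with
  | PConst _ => True
  | PVar i j => (i < N)%nat /\ (j < N)%nat
  | PAdd a b => bnd N a /\ bnd N b
  | PMul a b => bnd N a /\ bnd N b
  end.

Definition IsPoly (N : nat) (f : (nat -> nat -> R) -> R) : Prop :=
  exists p, bnd N p /\ forall V, peval p V = f V.

Lemma IsPoly_const N c : IsPoly N (fun _ => c).
Proof. exists (PConst c); simpl; auto. Qed.

Lemma IsPoly_var N i j : (i < N)%nat -> (j < N)%nat -> IsPoly N (fun V => V i j).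
Proof. intros; exists (PVar i j); simpl; auto. Qed.

Lemma IsPoly_add N f g : IsPoly N f -> IsPoly N g -> IsPoly N (fun V => f V + g V).
Proof. intros [p [Hp Ep]] [q [Hq Eq]]. exists (PAdd p q); simpl; split; auto. intros; now rewrite Ep, Eq. Qed.

Lemma IsPoly_mul N f g : IsPoly N f -> IsPoly N g -> IsPoly N (fun V => f V * g V).
Proof. intros [p [Hp Ep]] [q [Hq Eq]]. exists (PMul p q); simpl; split; auto. intros; now rewrite Ep, Eq. Qed.

Lemma IsPoly_ext N f g : IsPoly N f -> (forall V, f V = g V) -> IsPoly N g.
Proof. intros [p [Hp Ep]] H. exists p; split; auto. intros; now rewrite Ep. Qed.

Lemma IsPoly_sumN N n F : (forall k, (k < n)%nat -> IsPoly N (F k)) ->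
  IsPoly N (fun V => sumN n (fun k => F k V)).
Proof.
  induction n; simpl; intros H. apply IsPoly_const.
  apply IsPoly_add. apply IHn; intros; apply H; lia. apply H; lia.
Qed.

Lemma IsPoly_krylov N k i : (i < N)%nat -> IsPoly N (fun V => krylov N V k i).
Proof.
  revert i; induction k; intros i Hi; simpl.
  - apply IsPoly_const.
  - unfold matvec. apply IsPoly_sumN. intros j Hj. apply IsPoly_mul.
    apply IsPoly_var; auto. apply IHk; auto.
Qed.

Lemma peval_cont N p : bnd N p -> forall V eps, eps > 0 -> exists d, d > 0 /\
  forall W, mx_close N d V W -> Rabs (peval p W - peval p V) < eps.
Proof.
  induction p; simpl; intros Hb V eps He.
  - exists 1; split; [lra|]. intros. rewrite Rminus_diag, Rabs_R0; lra.
  - exists eps; split; auto. intros W HW. destruct Hb as [Hi Hj].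
    rewrite Rabs_minus_sym. apply HW; auto.
  - destruct Hb as [H1 H2].
    destruct (IHp1 H1 V (eps/2) ltac:(lra)) as [d1 [Hd1 E1]].
    destruct (IHp2 H2 V (eps/2) ltac:(lra)) as [d2 [Hd2 E2]].
    exists (Rmin d1 d2); split. apply Rmin_glb_lt; auto.
    intros W HW.
    assert (C1: mx_close N d1 V W). { intros i j Hi Hj. specialize (HW i j Hi Hj). pose proof (Rmin_l d1 d2). lra. }
    assert (C2: mx_close N d2 V W). { intros i j Hi Hj. specialize (HW i j Hi Hj). pose proof (Rmin_r d1 d2). lra. }
    specialize (E1 W C1). specialize (E2 W C2).
    replace (peval p1 W + peval p2 W - (peval p1 V + peval p2 V)) with
      ((peval p1 W - peval p1 V) + (peval p2 W - peval p2 V)) by ring.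
    eapply Rle_lt_trans. apply Rabs_triang. lra.
  - destruct Hb as [H1 H2].
    set (a := peval p1 V). set (b := peval p2 V).
    set (A := Rabs a + 1). set (B := Rabs b + 1).
    assert (HA : A > 0) by (unfold A; pose proof (Rabs_pos a); lra).
    assert (HB : B > 0) by (unfold B; pose proof (Rabs_pos b); lra).
    destruct (IHp1 H1 V (eps/(2*B))) as [d1 [Hd1 E1]].
    { apply Rdiv_lt_0_compat; lra. }
    destruct (IHp2 H2 V (Rmin 1 (eps/(2*A)))) as [d2 [Hd2 E2]].
    { apply Rmin_glb_lt. lra. apply Rdiv_lt_0_compat; lra. }
    exists (Rmin d1 d2); split. apply Rmin_glb_lt; auto.
    intros W HW.
    assert (C1: mx_close N d1 V W). { intros i j Hi Hj. specialize (HW i j Hi Hj). pose proof (Rmin_l d1 d2). lra. }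
    assert (C2: mx_close N d2 V W). { intros i j Hi Hj. specialize (HW i j Hi Hj). pose proof (Rmin_r d1 d2). lra. }
    specialize (E1 W C1). specialize (E2 W C2). fold a b in E1, E2.
    set (a' := peval p1 W) in *. set (b' := peval p2 W) in *.
    pose proof (Rmin_l 1 (eps/(2*A))). pose proof (Rmin_r 1 (eps/(2*A))).
    assert (Hb' : Rabs b' <= B).
    { unfold B. replace b' with (b + (b' - b)) by ring.
      eapply Rle_trans. apply Rabs_triang. lra. }
    replace (a' * b' - a * b) with ((a' - a) * b' + a * (b' - b)) by ring.
    eapply Rle_lt_trans. apply Rabs_triang. rewrite !Rabs_mult.
    assert (T1 : Rabs (a' - a) * Rabs b' <= eps/(2*B) * B).
    { apply Rmult_le_compat; try apply Rabs_pos; lra. }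
    assert (HaA : Rabs a < A) by (unfold A; lra).
    assert (T2 : Rabs a * Rabs (b' - b) < A * (eps/(2*A))).
    { apply Rmult_le_0_lt_compat; try apply Rabs_pos; lra. }
    assert (E3: eps/(2*B)*B = eps/2) by (field; lra).
    assert (E4: A*(eps/(2*A)) = eps/2) by (field; lra).
    lra.
Qed.

Lemma peval_ext p f g : (forall i j, f i j = g i j) -> peval p f = peval p g.
Proof. intros H; induction p; simpl; auto; congruence. Qed.

Lemma div_pos_lt eta a : 0 < eta -> 1 < a -> 0 < eta / a /\ eta / a < eta.
Proof.
  intros He Ha. split. apply Rdiv_lt_0_compat; lra.
  apply (Rmult_lt_reg_r a). lra. unfold Rdiv. rewrite Rmult_assoc, Rinv_l by lra. nra.
Qed.

Lemma div_inj eta a b : 0 < eta -> 0 < a -> 0 < b -> eta / a = eta / b -> a = b.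
Proof.
  intros He Ha Hb H. assert (a = eta / (eta / a)) by (field; lra).
  rewrite H0, H. field; split; lra.
Qed.

Lemma INR_k2 k : 1 < INR (k + 2).
Proof. rewrite plus_INR. simpl. pose proof (pos_INR k). lra. Qed.

Open Scope bool_scope.

Fixpoint reach (N : nat) (adj : nat -> nat -> bool) (k v : nat) : bool :=
  match k with
  | O => Nat.eqb v 0
  | S k' => reach N adj k' v || existsb (fun u => adj u v && reach N adj k' u) (seq 0 N)
  end.

Lemma reach_S N adj k v : reach N adj k v = true -> reach N adj (S k) v = true.
Proof. intros H; simpl; now rewrite H. Qed.

Lemma reach_mono N adj k k' v : (k <= k')%nat -> reach N adj k v = true -> reach N adj k' v = true.
Proof. induction 1; auto. intros Hr; apply reach_S; auto. Qed.

Lemma reach_step N adj k u v : (u < N)%nat -> adj u v = true -> reach N adj k u = true ->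
  reach N adj (S k) v = true.
Proof.
  intros Hu Ha Hr; simpl. apply Bool.orb_true_iff; right.
  apply existsb_exists. exists u; split. apply in_seq; lia. now rewrite Ha, Hr.
Qed.

Lemma reach_inv N adj k v : reach N adj (S k) v = true ->
  reach N adj k v = true \/ exists u, (u < N)%nat /\ adj u v = true /\ reach N adj k u = true.
Proof.
  simpl; intros H. apply Bool.orb_true_iff in H; destruct H as [H|H]; auto.
  right. apply existsb_exists in H. destruct H as [u [Hu H]]. apply in_seq in Hu.
  apply andb_true_iff in H. exists u; split; [lia|tauto].
Qed.

Lemma reach_conn N adj : (1 <= N)%nat -> graph_connected N adj ->
  forall v, (v < N)%nat -> exists k, reach N adj k v = true.
Proof.
  intros HN Hc v Hv. specialize (Hc 0%nat v ltac:(lia) Hv).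
  apply clos_rt_rtn1 in Hc. clear Hv. induction Hc as [|y z Hyz Hrt IH].
  - exists 0%nat; simpl; auto.
  - destruct IH as [k Hk]. destruct Hyz as [Hy [Hz Ha]].
    exists (S k). exact (reach_step N adj k y z Hy Ha Hk).
Qed.

Lemma reach_bound N adj : (1 <= N)%nat -> graph_connected N adj ->
  exists M, forall v, (v < N)%nat -> reach N adj M v = true.
Proof.
  intros HN Hc.
  assert (forall n, (n <= N)%nat -> exists M, forall v, (v < n)%nat -> reach N adj M v = true).
  { induction n; intros Hn. exists 0%nat; intros; lia.
    destruct (IHn ltac:(lia)) as [M HM].
    destruct (reach_conn N adj HN Hc n ltac:(lia)) as [k Hk].
    exists (M + k)%nat. intros v Hv. destruct (Nat.eq_dec v n).
    - subst. eapply reach_mono; [|eauto]; lia.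
    - eapply reach_mono; [|apply HM; lia]; lia. }
  apply (H N); lia.
Qed.

Fixpoint firstP (P : nat -> bool) (n : nat) : nat :=
  match n with
  | O => 0
  | S n' => if P 0%nat then 0 else S (firstP (fun i => P (S i)) n')
  end.

Lemma firstP_spec n : forall P k, (k <= n)%nat -> P k = true ->
  P (firstP P n) = true /\ forall k', P k' = true -> (firstP P n <= k')%nat.
Proof.
  induction n; intros P k Hk HP; simpl.
  - assert (k = 0%nat) by lia; subst. split; auto. intros; lia.
  - destruct (P 0%nat) eqn:E. split; auto; intros; lia.
    destruct k. congruence.
    destruct (IHn (fun i => P (S i)) k ltac:(lia) HP) as [H1 H2]. split; auto.
    intros [|k'] Hk'. congruence. specialize (H2 k' Hk'). lia.
Qed.

Lemma exists_max (N : nat) (P : nat -> Prop) (f : nat -> nat) :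
  (exists u, (u < N)%nat /\ P u) ->
  exists r, (r < N)%nat /\ P r /\ forall u, (u < N)%nat -> P u -> (f u <= f r)%nat.
Proof.
  induction N; intros [u [Hu Pu]]. lia.
  destruct (Classical_Prop.classic (exists u, (u < N)%nat /\ P u)) as [Ex|Nx].
  - destruct (IHN Ex) as [r [Hr [Pr Hm]]].
    destruct (Classical_Prop.classic (P N)) as [PN|PN].
    + destruct (Nat.le_gt_cases (f N) (f r)).
      * exists r; repeat split; auto. intros w Hw Pw. destruct (Nat.eq_dec w N). subst; auto. apply Hm; auto; lia.
      * exists N; repeat split; auto. intros w Hw Pw. destruct (Nat.eq_dec w N). subst; auto.
        specialize (Hm w ltac:(lia) Pw). lia.
    + exists r; repeat split; auto. intros w Hw Pw. destruct (Nat.eq_dec w N). subst; tauto. apply Hm; auto; lia.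
  - assert (u = N). { destruct (Nat.eq_dec u N); auto. exfalso; apply Nx; exists u; split; auto; lia. }
    subst. exists N; repeat split; auto. intros w Hw Pw. destruct (Nat.eq_dec w N). subst; auto.
    exfalso; apply Nx; exists w; split; auto; lia.
Qed.

Open Scope bool_scope.

Section Constr.
Variables (N : nat) (adj : nat -> nat -> bool) (M : nat).
Hypothesis HN : (1 <= N)%nat.
Hypothesis Hsym : graph_symmetric adj.
Hypothesis Hloops : all_loops N adj.
Hypothesis HM : forall v, (v < N)%nat -> reach N adj M v = true.

Definition dist (v : nat) : nat := firstP (fun k => reach N adj k v) M.
Definition key (v : nat) : nat := (N * dist v + v)%nat.
Definition dd (i : nat) : R := INR (2 * N + 1) + INR (key i).
Definition Lm (i j : nat) : R :=
  if (Nat.ltb i N) && (Nat.ltb j N) && adj j i && Nat.eqb (dist i) (S (dist j)) then 1 else 0.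
Definition Dm (i j : nat) : R := if (Nat.ltb i N) && Nat.eqb i j then dd i else 0.
Definition Bm (d : R) (i j : nat) : R := Dm i j + Lm i j + d * Lm j i.
Definition Wm (e : R) (i j : nat) : R := Dm i j + e * (Lm i j + Lm j i).

Lemma dist_spec v : (v < N)%nat -> reach N adj (dist v) v = true /\
  forall k, reach N adj k v = true -> (dist v <= k)%nat.
Proof.
  intros Hv. unfold dist. destruct (firstP_spec M (fun k => reach N adj k v) M) as [H1 H2]; auto.
Qed.

Lemma dist0 : dist 0 = 0%nat.
Proof.
  destruct (dist_spec 0 ltac:(lia)) as [_ H]. specialize (H 0%nat eq_refl). lia.
Qed.

Lemma dist_zero v : (v < N)%nat -> dist v = 0%nat -> v = 0%nat.
Proof.
  intros Hv H. destruct (dist_spec v Hv) as [H1 _]. rewrite H in H1. simpl in H1.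
  now apply Nat.eqb_eq in H1.
Qed.

Lemma dist_pred v : (v < N)%nat -> v <> 0%nat ->
  exists u, (u < N)%nat /\ adj u v = true /\ dist v = S (dist u).
Proof.
  intros Hv Hnz. destruct (dist_spec v Hv) as [H1 H2].
  destruct (dist v) as [|k] eqn:E. { apply dist_zero in E; auto; lia. }
  apply reach_inv in H1. destruct H1 as [H1|[u [Hu [Ha Hr]]]].
  - specialize (H2 k H1). lia.
  - exists u; repeat split; auto.
    destruct (dist_spec u Hu) as [U1 U2]. specialize (U2 k Hr).
    assert (reach N adj (S (dist u)) v = true) by (eapply reach_step; eauto).
    specialize (H2 _ H). lia.
Qed.

Lemma key_inj u v : (u < N)%nat -> (v < N)%nat -> key u = key v -> u = v.
Proof.
  unfold key; intros Hu Hv H.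
  destruct (Nat.lt_trichotomy (dist u) (dist v)) as [C|[C|C]].
  - assert (N * dist u + N <= N * dist v)%nat by nia. lia.
  - rewrite C in H; lia.
  - assert (N * dist v + N <= N * dist u)%nat by nia. lia.
Qed.

Lemma key_lt u v : (u < N)%nat -> (dist u < dist v)%nat -> (key u < key v)%nat.
Proof. unfold key; intros Hu H. assert (N * dist u + N <= N * dist v)%nat by nia. lia. Qed.

Lemma Lm_cases i j : (Lm i j = 0) \/
  (Lm i j = 1 /\ (i < N)%nat /\ (j < N)%nat /\ adj j i = true /\ dist i = S (dist j)).
Proof.
  unfold Lm. destruct (Nat.ltb_spec i N), (Nat.ltb_spec j N), (adj j i) eqn:E,
    (Nat.eqb_spec (dist i) (S (dist j))); simpl; auto; right; repeat split; auto.
Qed.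

Lemma Lm_nonneg i j : 0 <= Lm i j <= 1.
Proof. destruct (Lm_cases i j) as [H|[H _]]; rewrite H; lra. Qed.

Lemma dd_lt u v : (key u < key v)%nat -> dd u < dd v.
Proof. unfold dd; intros H. apply lt_INR in H. lra. Qed.

Lemma dd_ge u : INR (2 * N + 1) <= dd u.
Proof. unfold dd. pose proof (pos_INR (key u)). lra. Qed.

Lemma sum_Dm_l x u : (u < N)%nat -> sumN N (fun v => x v * Dm v u) = x u * dd u.
Proof.
  intros Hu. rewrite (sumN_ext _ _ (fun v => (if Nat.eqb u v then 1 else 0) * (x v * dd u))).
  apply sumN_delta; auto.
  intros v Hv. unfold Dm. destruct (Nat.ltb_spec v N); [|lia].
  destruct (Nat.eqb_spec v u), (Nat.eqb_spec u v); subst; simpl; try lia; lra.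
Qed.

Lemma sum_Dm_r x u : (u < N)%nat -> sumN N (fun v => Dm u v * x v) = dd u * x u.
Proof.
  intros Hu. rewrite (sumN_ext _ _ (fun v => (if Nat.eqb u v then 1 else 0) * (dd u * x v))).
  apply sumN_delta; auto.
  intros v Hv. unfold Dm. destruct (Nat.ltb_spec u N); [|lia].
  destruct (Nat.eqb_spec u v); subst; simpl; lra.
Qed.

Lemma sumN_ge_term n f i : (forall k, (k < n)%nat -> 0 <= f k) -> (i < n)%nat -> f i <= sumN n f.
Proof.
  induction n; simpl; intros H Hi. lia.
  assert (0 <= sumN n f) by (apply sumN_nonneg; intros; apply H; lia).
  destruct (Nat.eq_dec i n). subst. lra.
  assert (f i <= sumN n f) by (apply IHn; auto; try lia; intros; apply H; lia).
  assert (0 <= f n) by (apply H; lia). lra.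
Qed.

Lemma eigen_x0 x r : (r < N)%nat -> x r <> 0 ->
  (forall u, (u < N)%nat -> x u <> 0 -> (key u <= key r)%nat) ->
  (forall u, (u < N)%nat -> x u * dd u + sumN N (fun v => x v * Lm v u) = dd r * x u) ->
  x 0%nat <> 0.
Proof.
  intros Hr Hxr Hmax Heq.
  assert (Eq2 : forall u, (u < N)%nat ->
    sumN N (fun v => (x v * x r) * Lm v u) = (x u * x r) * (dd r - dd u)).
  { intros u Hu. specialize (Heq u Hu).
    rewrite (sumN_ext _ _ (fun v => x r * (x v * Lm v u))) by (intros; ring).
    rewrite sumN_scal.
    replace (sumN N (fun v => x v * Lm v u)) with (x u * (dd r - dd u)) by lra. ring. }
  assert (Hsign : forall t u, (u < N)%nat -> (key r - key u <= t)%nat -> 0 <= x u * x r).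
  { induction t; intros u Hu Ht.
    - destruct (Nat.lt_trichotomy (key u) (key r)) as [C|[C|C]]; [lia| |].
      + apply key_inj in C; auto. subst. nra.
      + destruct (Req_dec (x u) 0) as [E|E]. rewrite E; lra. specialize (Hmax u Hu E). lia.
    - destruct (Nat.lt_trichotomy (key u) (key r)) as [C|[C|C]].
      + assert (S0 : 0 <= sumN N (fun v => (x v * x r) * Lm v u)).
        { apply sumN_nonneg. intros v Hv. destruct (Lm_cases v u) as [L|[L [_ [_ [_ Hd]]]]].
          rewrite L; lra. rewrite L. rewrite Rmult_1_r. apply IHt; auto.
          assert (key u < key v)%nat by (apply key_lt; auto; lia). lia. }
        rewrite Eq2 in S0 by auto. assert (dd u < dd r) by (apply dd_lt; auto).
        destruct (Rle_lt_dec 0 (x u * x r)); auto. nra.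
      + apply key_inj in C; auto. subst. nra.
      + destruct (Req_dec (x u) 0) as [E|E]. rewrite E; lra. specialize (Hmax u Hu E). lia. }
  assert (Hchain : forall n w, (w < N)%nat -> dist w = n -> (key w <= key r)%nat ->
     0 < x w * x r -> 0 < x 0%nat * x r).
  { induction n; intros w Hw Hd Hk Hp.
    - apply dist_zero in Hd; auto. subst; auto.
    - assert (w <> 0%nat) by (intro; subst; rewrite dist0 in Hd; lia).
      destruct (dist_pred w Hw H) as [u [Hu [Ha Hdu]]].
      assert (Lwu : Lm w u = 1).
      { unfold Lm. destruct (Nat.ltb_spec w N); [|lia]. destruct (Nat.ltb_spec u N); [|lia].
        rewrite Ha. destruct (Nat.eqb_spec (dist w) (S (dist u))); [|lia]. reflexivity. }
      assert (Kuw : (key u < key w)%nat) by (apply key_lt; auto; lia).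
      assert (T : x w * x r * Lm w u <= sumN N (fun v => (x v * x r) * Lm v u)).
      { apply (sumN_ge_term N (fun v => (x v * x r) * Lm v u) w); auto.
        intros v Hv. pose proof (Lm_nonneg v u). apply Rmult_le_pos; [|lra].
        apply (Hsign (key r - key v)%nat); auto. }
      rewrite Eq2 in T by auto. rewrite Lwu in T.
      assert (dd u < dd r) by (apply dd_lt; lia).
      apply (IHn u); auto. lia. lia. nra. }
  assert (P : 0 < x 0%nat * x r) by (apply (Hchain (dist r) r); auto; nra).
  intro E; rewrite E in P; lra.
Qed.

Fixpoint countN (n k : nat) : nat :=
  match n with O => O | S m => (countN m k + (if Nat.ltb (key m) k then 1 else 0))%nat end.

Lemma countN_self n u : (u < n)%nat -> (countN n (key u) < n)%nat.
Proof.
  assert (G : forall n k, (countN n k <= n)%nat).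
  { induction n0; intros; simpl. lia. specialize (IHn0 k). destruct (Nat.ltb _ _); lia. }
  induction n; intros Hu; simpl. lia.
  destruct (Nat.eq_dec u n). subst. rewrite Nat.ltb_irrefl. specialize (G n (key n)). lia.
  specialize (IHn ltac:(lia)). destruct (Nat.ltb _ _); lia.
Qed.

Lemma countN_strict n w k1 k2 : (w < n)%nat -> (k1 <= key w)%nat -> (key w < k2)%nat ->
  (countN n k1 < countN n k2)%nat.
Proof.
  assert (G : forall n k1 k2, (k1 <= k2)%nat -> (countN n k1 <= countN n k2)%nat).
  { induction n0; intros; simpl. lia. specialize (IHn0 k0 k3 H).
    destruct (Nat.ltb_spec (key n0) k0), (Nat.ltb_spec (key n0) k3); lia. }
  induction n; intros Hw H1 H2; simpl. lia.
  destruct (Nat.eq_dec w n).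
  - subst. specialize (G n k1 k2 ltac:(lia)).
    destruct (Nat.ltb_spec (key n) k1), (Nat.ltb_spec (key n) k2); lia.
  - specialize (IHn ltac:(lia) H1 H2).
    destruct (Nat.ltb_spec (key n) k1), (Nat.ltb_spec (key n) k2); lia.
Qed.

Definition Ann (n : nat) (x : nat -> R) : Prop :=
  forall j, (j < n)%nat -> sumN N (fun u => x u * krylov N (Bm 0) j u) = 0.

Lemma sum_B0_l x u : (u < N)%nat ->
  sumN N (fun v => x v * Bm 0 v u) = x u * dd u + sumN N (fun v => x v * Lm v u).
Proof.
  intros Hu. rewrite (sumN_ext _ _ (fun v => x v * Dm v u + x v * Lm v u)).
  rewrite sumN_add, sum_Dm_l; auto. intros; unfold Bm; ring.
Qed.

Lemma ann_zero : forall n x, Ann n x ->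
  (forall u, (u < N)%nat -> (n <= countN N (key u))%nat -> x u = 0) ->
  forall u, (u < N)%nat -> x u = 0.
Proof.
  induction n; intros x Hann Hsupp.
  - intros u Hu; apply Hsupp; auto; lia.
  - destruct (Classical_Prop.classic (exists u, (u < N)%nat /\ x u <> 0)) as [Ex|Nx].
    2:{ intros u Hu. destruct (Req_dec (x u) 0); auto. exfalso; apply Nx; eauto. }
    exfalso.
    destruct (exists_max N (fun u => x u <> 0) key Ex) as [r [Hr [Hxr Hmax]]].
    assert (Cr : (countN N (key r) <= n)%nat).
    { destruct (Nat.le_gt_cases (S n) (countN N (key r))); [|lia]. exfalso; apply Hxr; auto. }
    set (x' := fun u => sumN N (fun v => x v * Bm 0 v u) - dd r * x u).
    assert (Z1 : forall u, (u < N)%nat -> (key r <= key u)%nat -> x' u = 0).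
    { intros u Hu Hk. unfold x'. rewrite sum_B0_l by auto.
      rewrite (sumN_ext _ _ (fun _ => 0)). rewrite sumN_zero.
      destruct (Nat.eq_dec u r). subst; ring.
      assert (x u = 0). { destruct (Req_dec (x u) 0); auto. specialize (Hmax u Hu H).
        assert (key u = key r) by lia. apply key_inj in H0; auto; lia. }
      rewrite H; ring.
      intros v Hv. destruct (Lm_cases v u) as [L|[L [_ [_ [_ Hd]]]]]. rewrite L; ring.
      assert (x v = 0). { destruct (Req_dec (x v) 0); auto. specialize (Hmax v Hv H).
        assert (key u < key v)%nat by (apply key_lt; auto; lia). lia. }
      rewrite H; ring. }
    assert (Ann' : Ann n x').
    { intros j Hj. unfold x'.
      rewrite (sumN_ext _ _ (fun u => sumN N (fun v => x v * Bm 0 v u * krylov N (Bm 0) j u)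
             + - (dd r * (x u * krylov N (Bm 0) j u)))).
      2:{ intros u Hu.
          assert (E : sumN N (fun v => x v * Bm 0 v u * krylov N (Bm 0) j u) =
                      krylov N (Bm 0) j u * sumN N (fun v => x v * Bm 0 v u)).
          { rewrite <- sumN_scal. apply sumN_ext; intros; ring. }
          rewrite E. ring. }
      rewrite sumN_add, sumN_opp, sumN_scal, sumN_swap.
      rewrite (Hann j ltac:(lia)).
      rewrite (sumN_ext _ _ (fun v => x v * krylov N (Bm 0) (S j) v)).
      rewrite (Hann (S j) ltac:(lia)). ring.
      intros v Hv. simpl. unfold matvec. rewrite <- sumN_scal. apply sumN_ext; intros; ring. }
    assert (X0 : forall u, (u < N)%nat -> x' u = 0).
    { apply (IHn x' Ann'). intros u Hu Hc. apply Z1; auto.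
      destruct (Nat.le_gt_cases (key r) (key u)); auto.
      assert (countN N (key u) < countN N (key r))%nat by (apply (countN_strict N u); auto; lia).
      lia. }
    assert (x 0%nat <> 0).
    { apply (eigen_x0 x r); auto. intros u Hu. specialize (X0 u Hu). unfold x' in X0.
      rewrite sum_B0_l in X0 by auto. lra. }
    apply H. specialize (Hann 0%nat ltac:(lia)). simpl in Hann.
    rewrite (sumN_ext _ _ (fun u => (if Nat.eqb 0 u then 1 else 0) * x u)) in Hann.
    rewrite sumN_delta in Hann; auto; lia.
    intros u Hu. unfold e1. destruct (Nat.eqb_spec u 0), (Nat.eqb_spec 0 u); subst; try lia; ring.
Qed.

Lemma ann_full x : Ann N x -> forall u, (u < N)%nat -> x u = 0.
Proof.
  intros H. apply (ann_zero N x H). intros u Hu Hc. pose proof (countN_self N u Hu). lia.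
Qed.

Lemma W_scale e i j : (i < N)%nat -> (j < N)%nat ->
  Wm e i j * e ^ (dist j) = e ^ (dist i) * Bm (e * e) i j.
Proof.
  intros Hi Hj. unfold Wm, Bm.
  assert (D : Dm i j * e ^ dist j = e ^ dist i * Dm i j).
  { unfold Dm. destruct (Nat.eqb_spec i j). subst. ring. rewrite andb_false_r. ring. }
  assert (L1 : e * Lm i j * e ^ dist j = e ^ dist i * Lm i j).
  { destruct (Lm_cases i j) as [L|[L [_ [_ [_ Hd]]]]]; rewrite L. ring. rewrite Hd; simpl; ring. }
  assert (L2 : e * Lm j i * e ^ dist j = e ^ dist i * (e * e * Lm j i)).
  { destruct (Lm_cases j i) as [L|[L [_ [_ [_ Hd]]]]]; rewrite L. ring. rewrite Hd; simpl; ring. }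
  replace ((Dm i j + e * (Lm i j + Lm j i)) * e ^ dist j) with
    (Dm i j * e ^ dist j + e * Lm i j * e ^ dist j + e * Lm j i * e ^ dist j) by ring.
  rewrite D, L1, L2. ring.
Qed.

Lemma krylov_scale e k i : (i < N)%nat ->
  krylov N (Wm e) k i = e ^ (dist i) * krylov N (Bm (e * e)) k i.
Proof.
  revert i; induction k; intros i Hi; simpl.
  - unfold e1. destruct (Nat.eqb_spec i 0). subst. rewrite dist0. simpl; ring. ring.
  - unfold matvec. rewrite <- sumN_scal. apply sumN_ext. intros j Hj.
    rewrite IHk by auto. rewrite <- Rmult_assoc, W_scale by auto. ring.
Qed.

Lemma W_SGamma e : in_SGamma N adj (Wm e).
Proof.
  split.
  - intros i j. unfold Wm. replace (Dm i j) with (Dm j i). ring.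
    unfold Dm. destruct (Nat.eqb_spec i j), (Nat.eqb_spec j i); subst; try lia; auto.
    rewrite !andb_false_r; auto.
  - intros i j Hne. unfold Wm.
    assert (Dm i j = 0).
    { unfold Dm. destruct (Nat.ltb_spec i N), (Nat.eqb_spec i j); simpl; auto.
      subst. exfalso. apply Hne. repeat split; auto. }
    assert (Lm i j = 0).
    { destruct (Lm_cases i j) as [L|[L [Hi [Hj [Ha _]]]]]; auto. exfalso; apply Hne.
      repeat split; auto. rewrite Hsym; auto. }
    assert (Lm j i = 0).
    { destruct (Lm_cases j i) as [L|[L [Hi [Hj [Ha _]]]]]; auto. exfalso; apply Hne.
      repeat split; auto. }
    rewrite H, H0, H1. ring.
Qed.

Lemma term_bound a y z : 0 <= a <= 2 -> a * y * z >= - (y * y + z * z).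
Proof.
  intros Ha. pose proof (Rle_0_sqr (y + z)). unfold Rsqr in H.
  replace (a * y * z) with (a * (y * z)) by ring.
  destruct (Rle_lt_dec 0 (y * z)).
  - assert (0 <= a * (y * z)) by (apply Rmult_le_pos; lra). nra.
  - assert (a * (y * z) >= 2 * (y * z)) by nra. nra.
Qed.

Lemma W_posdef e : 0 <= e <= 1 -> pos_def N (Wm e).
Proof.
  intros He x [i0 [Hi0 Hx0]]. unfold dot, matvec.
  set (S := sumN N (fun i => x i * x i)).
  assert (Hrow : forall i, (i < N)%nat ->
     x i * sumN N (fun j => Wm e i j * x j) >= dd i * (x i * x i) - (INR N * (x i * x i) + S)).
  { intros i Hi.
    rewrite <- sumN_scal.
    rewrite (sumN_ext _ _ (fun j => x i * (Dm i j * x j) + (e * (Lm i j + Lm j i)) * x i * x j))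
      by (intros; unfold Wm; ring).
    rewrite sumN_add. rewrite sumN_scal, sum_Dm_r by auto.
    assert (sumN N (fun j => (e * (Lm i j + Lm j i)) * x i * x j) >=
            sumN N (fun j => - (x i * x i + x j * x j))).
    { apply Rle_ge, sumN_le. intros j Hj. apply Rge_le, term_bound.
      pose proof (Lm_nonneg i j); pose proof (Lm_nonneg j i). split; nra. }
    rewrite sumN_opp, sumN_add, sumN_const in H. fold S in H. lra. }
  assert (Hsum : sumN N (fun i => x i * sumN N (fun j => Wm e i j * x j)) >=
     sumN N (fun i => dd i * (x i * x i) - (INR N * (x i * x i) + S))).
  { apply Rle_ge, sumN_le. intros; apply Rge_le, Hrow; auto. }
  assert (Hd : sumN N (fun i => dd i * (x i * x i) - (INR N * (x i * x i) + S)) >=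
     sumN N (fun i => INR (2 * N + 1) * (x i * x i) - (INR N * (x i * x i) + S))).
  { apply Rle_ge, sumN_le. intros i Hi. pose proof (dd_ge i). assert (0 <= x i * x i) by nra. nra. }
  rewrite (sumN_ext _ (fun i => INR (2 * N + 1) * (x i * x i) - (INR N * (x i * x i) + S))
     (fun i => (INR (2*N+1) - INR N) * (x i * x i) + - S)) in Hd by (intros; ring).
  rewrite sumN_add, sumN_scal, sumN_opp, sumN_const in Hd. fold S in Hd.
  assert (0 < S).
  { unfold S. apply (sumN_pos N _ i0); auto. intros; nra. assert (x i0 * x i0 > 0) by nra. lra. }
  rewrite plus_INR, mult_INR in Hd. simpl in Hd.
  assert (Hexp : (INR 2 * INR N + 1 - INR N) * S + - (INR N * S) = S).
  { replace (INR 2) with 2 by (simpl; ring). ring. }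
  lra.
Qed.

Lemma B_close d : 0 < d -> forall d', 0 <= d' < d -> mx_close N d (Bm 0) (Bm d').
Proof.
  intros Hd d' Hd' i j Hi Hj. unfold Bm.
  replace (Dm i j + Lm i j + 0 * Lm j i - (Dm i j + Lm i j + d' * Lm j i)) with (- (d' * Lm j i)) by ring.
  rewrite Rabs_Ropp. pose proof (Lm_nonneg j i). rewrite Rabs_right by nra. nra.
Qed.

End Constr.

Module MC.
Import all_boot all_order all_algebra Rstruct.
Import GRing.Theory.
Local Open Scope ring_scope.

Lemma sumN_big n f : sumN n f = \sum_(k < n) f k.
Proof. elim: n => [|n IH] /=; first by rewrite big_ord0. by rewrite big_ord_recr /= IH. Qed.

Lemma IsPoly_big N (I : Type) (r : seq I) (P : pred I) (F : I -> (nat -> nat -> R) -> R) :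
  (forall i, IsPoly N (F i)) -> IsPoly N (fun V => \sum_(i <- r | P i) F i V).
Proof.
  move=> H; elim: r => [|a r IH].
    apply: (IsPoly_ext N (fun _ => 0%R)); first exact: IsPoly_const.
    by move=> V; rewrite big_nil.
  case Pa: (P a).
    apply: (IsPoly_ext N (fun V => F a V + \sum_(i <- r | P i) F i V)).
      exact: IsPoly_add.
    by move=> V; rewrite big_cons Pa.
  apply: (IsPoly_ext _ _ _ IH). by move=> V; rewrite big_cons Pa.
Qed.

Lemma IsPoly_bigprod N (I : Type) (r : seq I) (P : pred I) (F : I -> (nat -> nat -> R) -> R) :
  (forall i, IsPoly N (F i)) -> IsPoly N (fun V => \prod_(i <- r | P i) F i V).
Proof.
  move=> H; elim: r => [|a r IH].
    apply: (IsPoly_ext N (fun _ => 1%R)); first exact: IsPoly_const.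
    by move=> V; rewrite big_nil.
  case Pa: (P a).
    apply: (IsPoly_ext N (fun V => F a V * \prod_(i <- r | P i) F i V)).
      exact: IsPoly_mul.
    by move=> V; rewrite big_cons Pa.
  apply: (IsPoly_ext _ _ _ IH). by move=> V; rewrite big_cons Pa.
Qed.

Definition KM (N : nat) (V : nat -> nat -> R) : 'M[R]_N := \matrix_(i < N, j < N) krylov N V j i.

Lemma det_IsPoly N : IsPoly N (fun V => \det (KM N V)).
Proof.
  rewrite /determinant.
  apply: IsPoly_big => s. apply: IsPoly_mul; first exact: IsPoly_const.
  apply: IsPoly_bigprod => i.
  apply: (IsPoly_ext N (fun V => krylov N V (nat_of_ord (perm.fun_of_perm.body s i)) (nat_of_ord i))).
    apply: IsPoly_krylov. by apply/ssrnat.ltP.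
  by move=> V; rewrite mxE.
Qed.

Lemma det_full N V : \det (KM N V) <> 0 -> lV_full N V.
Proof.
  move=> Hd x.
  have U : KM N V \in unitmx by rewrite unitmxE unitfE; apply/eqP.
  pose xc : 'cV[R]_N := \col_i x i.
  pose cv := invmx (KM N V) *m xc.
  have E : KM N V *m cv = xc by rewrite /cv mulKVmx.
  exists N, (fun k => if insub k is Some o then cv o ord0 else 0).
  move=> i Hi. have Hi' : (i < N)%N by apply/ssrnat.ltP.
  have := congr1 (fun M : 'M[R]_(N,1) => M (Ordinal Hi') ord0) E. rewrite /xc !mxE /= => <-.
  rewrite sumN_big. apply: eq_bigr => k _. by rewrite valK !mxE mulrC.
Qed.

Lemma ann_det N V : (forall x : nat -> R, (forall j, (j < N)%coq_nat ->
    sumN N (fun u => x u * krylov N V j u) = 0) -> forall u, (u < N)%coq_nat -> x u = 0) ->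
  \det (KM N V) <> 0.
Proof.
  move=> H /eqP /det0P [v vnz vK].
  pose x := fun u => if (insub u : option 'I_N) is Some o then v ord0 o else 0.
  have Hx : forall j, (j < N)%coq_nat -> sumN N (fun u => x u * krylov N V j u) = 0.
    move=> j /ssrnat.ltP Hj. have := congr1 (fun M : 'M[R]_(1,N) => M ord0 (Ordinal Hj)) vK.
    rewrite !mxE => <-. rewrite sumN_big; apply: eq_bigr => u _. by rewrite /x valK mxE.
  move/eqP: vnz; apply. apply/matrixP => a b. rewrite ord1 mxE.
  have := H x Hx b (ssrnat.ltP (ltn_ord b)). by rewrite /x valK.
Qed.

Lemma det_scale N V V' (s : nat -> R) :
  (forall k i, (i < N)%coq_nat -> krylov N V k i = s i * krylov N V' k i) ->
  (forall i, (i < N)%coq_nat -> s i <> 0) ->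
  \det (KM N V') <> 0 -> \det (KM N V) <> 0.
Proof.
  move=> H Hs Hd.
  have E : KM N V = diag_mx (\row_(i < N) s i) *m KM N V'.
    rewrite mul_diag_mx; apply/matrixP => i j; rewrite !mxE. apply: H. exact/ssrnat.ltP.
  rewrite E det_mulmx det_diag. apply/eqP; rewrite mulf_eq0 negb_or; apply/andP; split; last exact/eqP.
  apply/prodf_neq0 => i _. rewrite mxE. apply/eqP. apply: Hs. exact/ssrnat.ltP.
Qed.

Lemma peval_line p V W : exists P : {poly R}, forall t,
  peval p (fun i j => V i j + t * (W i j - V i j)) = P.[t].
Proof.
  elim: p => [c|i j|p1 [P1 E1] p2 [P2 E2]|p1 [P1 E1] p2 [P2 E2]] /=.
  - exists c%:P => t; by rewrite hornerC.
  - exists ((V i j)%:P + (W i j - V i j) *: 'X) => t. by rewrite hornerD hornerC hornerZ hornerX mulrC.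
  - exists (P1 + P2) => t. by rewrite hornerD E1 E2.
  - exists (P1 * P2) => t. by rewrite hornerM E1 E2.
Qed.

Lemma poly_nonzero_near (P : {poly R}) (eta : R) : P != 0 -> Rlt 0 eta ->
  exists t, Rlt 0 t /\ Rlt t eta /\ P.[t] <> 0.
Proof.
  move=> HP He.
  apply: Classical_Prop.NNPP => Hn.
  pose rs := [seq Rdiv eta (INR (k + 2)) | k <- iota 0 (size P)].
  have Hroot : all (root P) rs.
    apply/allP => y /mapP [k _ ->]. apply/eqP.
    apply: Classical_Prop.NNPP => Hy. apply: Hn. exists (Rdiv eta (INR (k + 2))).
    have [A B] := div_pos_lt eta (INR (k + 2)) He (INR_k2 k). by [].
  have Huniq : uniq rs.
    rewrite map_inj_uniq ?iota_uniq // => a b Hab.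
    have Ha := INR_k2 a; have Hb := INR_k2 b.
    have : INR (a + 2) = INR (b + 2).
      apply: (div_inj eta) => //; apply: Rlt_trans Rlt_0_1 _ => //.
    move/INR_eq. by move/eqP; rewrite eqn_add2r => /eqP.
  have := max_poly_roots HP Hroot Huniq. by rewrite size_map size_iota ltnn.
Qed.

Lemma line_nonzero p V W (eta : R) : peval p W <> 0 -> Rlt 0 eta ->
  exists t, Rlt 0 t /\ Rlt t eta /\ peval p (fun i j => V i j + t * (W i j - V i j)) <> 0.
Proof.
  move=> Hp He. have [P EP] := peval_line p V W.
  have HP : P != 0.
    apply/eqP => P0. apply: Hp. rewrite -(peval_ext p (fun i j => V i j + 1 * (W i j - V i j))).
      by rewrite EP P0 horner0.
    move=> i j /=. by rewrite mul1r addrC subrK.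
  have [t [H1 [H2 H3]]] := poly_nonzero_near P eta HP He.
  exists t; split => //; split => //. by rewrite EP.
Qed.

Definition detK (N : nat) (V : nat -> nat -> R) : R := \det (KM N V).

End MC.

Notation detK := MC.detK.

Lemma detK_poly N : exists p, bnd N p /\ forall V, peval p V = detK N V.
Proof. exact (MC.det_IsPoly N). Qed.

Lemma detK_full N V : detK N V <> 0 -> lV_full N V.
Proof. exact (MC.det_full N V). Qed.

Lemma detK_ann N V : (forall x : nat -> R, (forall j, (j < N)%nat ->
    sumN N (fun u => x u * krylov N V j u) = 0) -> forall u, (u < N)%nat -> x u = 0) ->
  detK N V <> 0.
Proof. exact (MC.ann_det N V). Qed.

Lemma detK_scale N V V' (s : nat -> R) :
  (forall k i, (i < N)%nat -> krylov N V k i = s i * krylov N V' k i) ->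
  (forall i, (i < N)%nat -> s i <> 0) -> detK N V' <> 0 -> detK N V <> 0.
Proof. exact (MC.det_scale N V V' s). Qed.

Lemma line_nz p V W eta : peval p W <> 0 -> 0 < eta ->
  exists t, 0 < t /\ t < eta /\ peval p (fun i j => V i j + t * (W i j - V i j)) <> 0.
Proof. exact (MC.line_nonzero p V W eta). Qed.

Lemma matvec_line N V W t x i :
  matvec N (fun i j => V i j + t * (W i j - V i j)) x i =
  (1 - t) * matvec N V x i + t * matvec N W x i.
Proof.
  unfold matvec. rewrite <- !sumN_scal, <- sumN_add. apply sumN_ext; intros; ring.
Qed.

Lemma dot_line N V W t x :
  dot N x (matvec N (fun i j => V i j + t * (W i j - V i j)) x) =
  (1 - t) * dot N x (matvec N V x) + t * dot N x (matvec N W x).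
Proof.
  unfold dot. rewrite <- !sumN_scal, <- sumN_add. apply sumN_ext; intros.
  rewrite matvec_line. ring.
Qed.

Lemma sq_sum_zero N q : sumN N (fun i => q i * q i) = 0 -> forall i, (i < N)%nat -> q i = 0.
Proof.
  intros H i Hi. destruct (Req_dec (q i) 0); auto. exfalso.
  assert (0 < sumN N (fun i => q i * q i)).
  { apply (sumN_pos N _ i); auto. intros; nra. assert (q i * q i > 0) by nra. lra. }
  lra.
Qed.

Lemma full_L0 N V : lV_full N V -> L0_trivial N V.
Proof.
  intros Hf q p H i Hi.
  assert (Hq := H q (fun _ => 0) (conj (Hf q) (Hf (fun _ => 0)))).
  assert (Hp := H (fun _ => 0) p (conj (Hf (fun _ => 0)) (Hf p))).
  unfold dot in Hq, Hp.
  rewrite (sumN_ext _ (fun i => p i * 0) (fun _ => 0)) in Hq by (intros; ring).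
  rewrite (sumN_ext _ (fun i => q i * 0) (fun _ => 0)) in Hp by (intros; ring).
  rewrite sumN_zero in Hq, Hp. split.
  apply (sq_sum_zero N q); auto; lra. apply (sq_sum_zero N p); auto; lra.
Qed.

Theorem mainTheorem19 (N : nat) (adj : nat -> nat -> bool) :
  (1 <= N)%nat ->
  graph_symmetric adj ->
  all_loops N adj ->
  graph_connected N adj ->
  exists Hplus : (nat -> nat -> R) -> Prop,
    (forall V, Hplus V -> in_HGamma N adj V) /\
    rel_open N adj Hplus /\
    dense_in_H N adj Hplus /\
    lower_dim N adj (fun V => in_HGamma N adj V /\ ~ Hplus V) /\
    (forall V, Hplus V -> L0_trivial N V /\ lV_full N V).
Proof.
  intros HN Hsym Hloops Hconn.
  destruct (reach_bound N adj HN Hconn) as [M HM].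
  destruct (detK_poly N) as [p [Hbp Ep]].
  assert (HB0 : peval p (Bm N adj M 0) <> 0).
  { rewrite Ep. apply detK_ann. intros x Hx. apply (ann_full N adj M HN HM x). exact Hx. }
  destruct (peval_cont N p Hbp (Bm N adj M 0) (Rabs (peval p (Bm N adj M 0))))
    as [d0 [Hd0 Hc0]].
  { apply Rabs_pos_lt; auto. }
  set (dl := Rmin (d0 / 2) (1 / 2)).
  assert (Hdl : 0 < dl /\ dl < d0 /\ dl <= 1).
  { unfold dl. pose proof (Rmin_l (d0/2) (1/2)); pose proof (Rmin_r (d0/2) (1/2)).
    split; [apply Rmin_glb_lt; lra|]. lra. }
  set (ep := sqrt dl).
  assert (Hep : 0 < ep /\ ep <= 1 /\ ep * ep = dl).
  { unfold ep. split. apply sqrt_lt_R0; lra. split.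
    rewrite <- sqrt_1. apply sqrt_le_1_alt; lra. apply sqrt_sqrt; lra. }
  set (Ws := Wm N adj M ep).
  assert (HWs : peval p Ws <> 0).
  { assert (HBd : peval p (Bm N adj M dl) <> 0).
    { specialize (Hc0 (Bm N adj M dl) (B_close N adj M d0 Hd0 dl ltac:(lra))).
      intro E; rewrite E in Hc0. rewrite Rminus_0_l, Rabs_Ropp in Hc0. lra. }
    rewrite Ep in HBd |- *. unfold Ws.
    apply (detK_scale N _ (Bm N adj M dl) (fun i => ep ^ dist N adj M i)).
    - intros k i Hi. rewrite (krylov_scale N adj M HN HM ep k i Hi). destruct Hep as [_ [_ ->]]. reflexivity.
    - intros i Hi. apply pow_nonzero. lra.
    - exact HBd. }
  assert (HWsH : in_HGamma N adj Ws).
  { split. apply W_SGamma; auto. apply W_posdef; auto. lra. }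
  set (Hplus := fun V => in_HGamma N adj V /\ peval p V <> 0).
  exists Hplus. split; [|split; [|split; [|split]]].
  - intros V [H _]; exact H.
  - intros V [HV Hp].
    destruct (peval_cont N p Hbp V (Rabs (peval p V)) ltac:(apply Rabs_pos_lt; auto)) as [d [Hd Hc]].
    exists d; split; auto. intros W HW Hcl. split; auto.
    specialize (Hc W Hcl). intro E; rewrite E in Hc. rewrite Rminus_0_l, Rabs_Ropp in Hc. lra.
  - intros V HV eps Heps.
    set (Mb := sumN N (fun i => sumN N (fun j => Rabs (Ws i j - V i j))) + 1).
    assert (HMb : forall i j, (i < N)%nat -> (j < N)%nat -> Rabs (Ws i j - V i j) < Mb).
    { intros i j Hi Hj. unfold Mb.
      assert (Rabs (Ws i j - V i j) <= sumN N (fun j => Rabs (Ws i j - V i j))).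
      { apply (sumN_ge_term N HN N (fun j => Rabs (Ws i j - V i j)) j); auto. intros; apply Rabs_pos. }
      assert (sumN N (fun j => Rabs (Ws i j - V i j)) <= sumN N (fun i => sumN N (fun j => Rabs (Ws i j - V i j)))).
      { apply (sumN_ge_term N HN N (fun i => sumN N (fun j => Rabs (Ws i j - V i j))) i); auto.
        intros; apply sumN_nonneg; intros; apply Rabs_pos. }
      lra. }
    assert (HMb0 : 0 < Mb).
    { unfold Mb. assert (0 <= sumN N (fun i => sumN N (fun j => Rabs (Ws i j - V i j)))).
      { apply sumN_nonneg; intros; apply sumN_nonneg; intros; apply Rabs_pos. } lra. }
    set (eta := Rmin 1 (eps / Mb)).
    assert (Heta : 0 < eta /\ eta <= 1 /\ eta <= eps / Mb).
    { unfold eta. split. apply Rmin_glb_lt. lra. apply Rdiv_lt_0_compat; lra.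
      split. apply Rmin_l. apply Rmin_r. }
    destruct (line_nz p V Ws eta HWs ltac:(lra)) as [t [Ht1 [Ht2 Ht3]]].
    exists (fun i j => V i j + t * (Ws i j - V i j)). split; [split; [split|]|].
    + destruct HV as [[HVs HVz] HVp]. destruct HWsH as [[HWss HWsz] _].
      split.
      * intros i j. rewrite HVs, HWss. reflexivity.
      * intros i j Hne. rewrite HVz, HWsz by auto. ring.
    + intros x Hx. rewrite dot_line.
      destruct HV as [_ HVp]. destruct HWsH as [_ HWp].
      specialize (HVp x Hx). specialize (HWp x Hx).
      assert (0 < t * dot N x (matvec N Ws x)) by (apply Rmult_lt_0_compat; lra).
      assert (0 <= (1 - t) * dot N x (matvec N V x)) by (apply Rmult_le_pos; lra).
      lra.
    + exact Ht3.
    + intros i j Hi Hj.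
      replace (V i j - (V i j + t * (Ws i j - V i j))) with (- (t * (Ws i j - V i j))) by ring.
      rewrite Rabs_Ropp, Rabs_mult, (Rabs_right t) by lra.
      specialize (HMb i j Hi Hj).
      assert (t * Rabs (Ws i j - V i j) <= t * Mb) by (apply Rmult_le_compat_l; lra).
      assert (t * Mb < eps / Mb * Mb) by (apply Rmult_lt_compat_r; lra).
      assert (eps / Mb * Mb = eps) by (field; lra). lra.
  - exists p. split.
    + exists Ws. split; auto. destruct HWsH; auto.
    + intros V [HV Hn]. apply Classical_Prop.NNPP. intro Hp. apply Hn. split; auto.
  - intros V [HV Hp]. rewrite Ep in Hp. assert (Hf := detK_full N V Hp). split; auto.
    apply full_L0; auto.
Qed.
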